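(* Let $S$ be an average $\tau$-mutation system with $\tau>1$ and starting word of length $m$, and let $Y_n=|S(n)|$. Then there is a constant $C_0$ such that for all $n\ge1$, \[\frac{1}{(n(\tau-1)+m)^2}\,\mathbb{E}\Big[\big(Y_n-n(\tau-1)-m\big)^2\Big]\le\frac{C_0}{n}.\]
   Context: Let $\mathcal{A}=\{a_0,\dots,a_{d-1}\}$. A mutation law assigns to each $a_t$ a finitely supported probability distribution $\mathbb{P}_{a_t}$ on the finite nonempty words over $\mathcal{A}$; $\vartheta(a_t)$ is a random word with law $\mathbb{P}_{a_t}$; it is an average $\tau$-mutation law if $\mathbb{E}|\vartheta(a_t)|=\tau$ for all $t$. A mutation step on $w=w_0\cdots w_{m-1}$ picks $i$ uniformly in $\{0,\dots,m-1\}$ and replaces $w_i$ by an independent sample of $\vartheta(w_i)$. The system is $S(0)=w$, $S(n)=\vartheta(S(n-1))$ with independent randomness at each step. *)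

(* Defs.v *)
From mathcomp Require Import all_boot all_order all_algebra.
From mathcomp Require Import reals.
Set Implicit Arguments. Unset Strict Implicit. Unset Printing Implicit Defensive.
Import Order.TTheory GRing.Theory Num.Theory.
Local Open Scope ring_scope.

(* A finitely supported probability distribution on a type T is represented
   by a finite list of (outcome, weight) pairs (repetitions allowed). *)
Definition fdist (R : Type) (T : Type) := seq (T * R).

Definition expect {R : nzRingType} {T : Type} (D : fdist R T) (f : T -> R) : R :=
  \sum_(p <- D) p.2 * f p.1.

Definition mutation_law {R : realType} (d : nat)
    (P : 'I_d -> fdist R (seq 'I_d)) : Prop :=
  forall t : 'I_d,
    (forall p, p \in P t -> 0 <= p.2 /\ (0 < size p.1)%N) /\
    \sum_(p <- P t) p.2 = 1.

Definition avg_mutation_law {R : realType} (d : nat)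
    (P : 'I_d -> fdist R (seq 'I_d)) (tau : R) : Prop :=
  mutation_law P /\ forall t : 'I_d, expect (P t) (fun v => (size v)%:R) = tau.

(* distribution of theta(w): pick i uniformly in {0..m-1}, replace w_i by an
   independent sample of theta(w_i) *)
Definition mutation_step {R : realType} (d : nat)
    (P : 'I_d -> fdist R (seq 'I_d)) (w : seq 'I_d) : fdist R (seq 'I_d) :=
  flatten [seq [seq (take ia.1 w ++ p.1 ++ drop ia.1.+1 w, p.2 / (size w)%:R)
               | p <- P ia.2]
          | ia <- zip (iota 0 (size w)) w].

Definition system_step {R : realType} (d : nat)
    (P : 'I_d -> fdist R (seq 'I_d)) (D : fdist R (seq 'I_d)) : fdist R (seq 'I_d) :=
  flatten [seq [seq (q.1, p.2 * q.2) | q <- mutation_step P p.1] | p <- D].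

Definition system_law {R : realType} (d : nat)
    (P : 'I_d -> fdist R (seq 'I_d)) (w : seq 'I_d) (n : nat) : fdist R (seq 'I_d) :=
  iter n (system_step P) [:: (w, 1)].

(* Main.v *)
Require Import Defs.
From mathcomp Require Import all_boot all_order all_algebra.
From mathcomp Require Import reals.
From mathcomp Require Import ring lra zify.
Import Order.TTheory GRing.Theory Num.Theory.
Local Open Scope ring_scope.

Section Aux.
Variable R : realType.

Lemma expect_ext {T : Type} (D : fdist R T) f g :
  (forall x, f x = g x) -> expect D f = expect D g.
Proof. by move=> H; rewrite /expect; apply: eq_bigr => p _; rewrite H. Qed.

Lemma expect_flatten {T : Type} (L : seq (fdist R T)) f :
  expect (flatten L) f = \sum_(l <- L) expect l f.
Proof. by rewrite /expect big_flatten. Qed.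

Lemma sum_const_seq {I : Type} (r : seq I) (c : R) :
  \sum_(i <- r) c = (size r)%:R * c.
Proof.
elim: r => [|x r IH]; first by rewrite big_nil mul0r.
by rewrite big_cons IH /= -addn1 natrD; ring.
Qed.

Lemma mem_zip_iota {T : eqType} (w : seq T) k n ia :
  ia \in zip (iota k n) w -> (ia.1 < k + n)%N.
Proof.
elim: w k n => [|y w IH] k [|n] //=.
rewrite in_cons => /orP [/eqP -> /=| /IH]; rewrite ?addnS ?addSn ?ltnS ?leq_addr //; exact: ltnW.
Qed.

Variable d : nat.
Variable P : 'I_d -> fdist R (seq 'I_d).

Lemma expect_system_step D f :
  expect (system_step P D) f = \sum_(p <- D) p.2 * expect (mutation_step P p.1) f.
Proof.
rewrite /system_step expect_flatten big_map; apply: eq_bigr => p _.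
by rewrite /expect big_map mulr_sumr; apply: eq_bigr => q _ /=; rewrite mulrA.
Qed.

Lemma expect_mut w f :
  expect (mutation_step P w) f =
  \sum_(ia <- zip (iota 0 (size w)) w) \sum_(p <- P ia.2)
     p.2 / (size w)%:R * f (take ia.1 w ++ p.1 ++ drop ia.1.+1 w).
Proof.
rewrite /mutation_step expect_flatten big_map; apply: eq_bigr => ia _.
by rewrite /expect big_map.
Qed.

Lemma size_mut (w : seq 'I_d) i (k : seq 'I_d) : (i < size w)%N ->
  (size (take i w ++ k ++ drop i.+1 w))%:R = (size k)%:R + (size w)%:R - 1 :> R.
Proof.
move=> Hi.
have H : (size (take i w ++ k ++ drop i.+1 w) + 1 = size k + size w)%N.
  rewrite !size_cat size_takel ?size_drop; lia.
have := congr1 (fun n => n%:R : R) H; rewrite !natrD => <-; ring.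
Qed.

End Aux.

Section Main.
Variable R : realType.
Variable d : nat.
Variable P : 'I_d -> fdist R (seq 'I_d).
Variable tau : R.
Hypothesis HP : avg_mutation_law P tau.

Definition Kt (t : 'I_d) := expect (P t) (fun v => ((size v)%:R - tau) ^+ 2).
Definition KK := \sum_(t < d) Kt t.

Lemma wt_ge0 t p : p \in P t -> 0 <= p.2.
Proof. by move=> pP; have [/(_ p pP) [] ] := (HP.1 t). Qed.

Lemma Kt_ge0 t : 0 <= Kt t.
Proof.
rewrite /Kt /expect big_seq; apply: sumr_ge0 => p pP.
by apply: mulr_ge0; [exact: wt_ge0 pP | exact: sqr_ge0].
Qed.

Lemma K_ge0 : 0 <= KK.
Proof. by apply: sumr_ge0 => t _; exact: Kt_ge0. Qed.

Lemma Kt_le t : Kt t <= KK.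
Proof. rewrite /KK (bigD1 t) //= lerDl; apply: sumr_ge0 => i _; exact: Kt_ge0. Qed.

Lemma mass_P t : \sum_(p <- P t) p.2 = 1.
Proof. exact: (HP.1 t).2. Qed.

Lemma center_P t : \sum_(p <- P t) p.2 * ((size p.1)%:R - tau) = 0.
Proof.
under eq_bigr do rewrite mulrBr.
rewrite sumrB -mulr_suml mass_P.
have := HP.2 t; rewrite /expect => ->; ring.
Qed.

Lemma mut_bound w c :
  expect (mutation_step P w) (fun u => ((size u)%:R - c - (tau - 1)) ^+ 2)
  <= ((size w)%:R - c) ^+ 2 + KK.
Proof.
rewrite expect_mut.
have HA : 0 <= ((size w)%:R - c) ^+ 2 + KK by rewrite addr_ge0 ?sqr_ge0 ?K_ge0.
apply: (@le_trans _ _ (\sum_(ia <- zip (iota 0 (size w)) w)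
          ((size w)%:R^-1 * (((size w)%:R - c) ^+ 2 + KK)))).
  rewrite big_seq [X in _ <= X]big_seq; apply: ler_sum => ia Hia.
  have Hi := @mem_zip_iota _ w 0 (size w) ia Hia; rewrite add0n in Hi.
  rewrite (eq_bigr (fun p => (size w)%:R^-1 * (p.2 * ((size w)%:R - c) ^+ 2
       + 2 * ((size w)%:R - c) * (p.2 * ((size p.1)%:R - tau))
       + p.2 * ((size p.1)%:R - tau) ^+ 2))); last first.
    by move=> p _; rewrite size_mut //; ring.
  rewrite -mulr_sumr; apply: ler_wpM2l; first by rewrite invr_ge0 ler0n.
  rewrite !big_split /= -mulr_suml mass_P -mulr_sumr center_P mulr0 addr0 mul1r.
  rewrite lerD2l; exact: Kt_le.
rewrite sum_const_seq size_zip size_iota minnn.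
move: HA; have [->|nz] := eqVneq (size w) 0%N; first by rewrite mul0r.
move=> _.
by rewrite mulrA mulfV ?mul1r // pnatr_eq0.
Qed.

Lemma mut_nonneg w : all (fun q => 0 <= q.2) (mutation_step P w).
Proof.
apply/allP => q /flattenP [l /mapP [ia _ ->] /mapP [p pP ->]] /=.
by rewrite divr_ge0 ?ler0n //; exact: wt_ge0 pP.
Qed.

Lemma mut_mass w : expect (mutation_step P w) (fun _ => 1) <= 1.
Proof.
rewrite expect_mut (eq_bigr (fun _ => (size w)%:R^-1)); last first.
  move=> ia _; rewrite (eq_bigr (fun p => (size w)%:R^-1 * p.2)).
    by rewrite -mulr_sumr mass_P mulr1.
  by move=> p _; rewrite mulr1 mulrC.
rewrite sum_const_seq size_zip size_iota minnn.
have [->|nz] := eqVneq (size w) 0%N; first by rewrite mulr0n mul0r ler01.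
by rewrite mulfV // pnatr_eq0.
Qed.

Lemma sys_nonneg D : all (fun q => 0 <= q.2) D ->
  all (fun q => 0 <= q.2) (system_step P D).
Proof.
move=> /allP HD; apply/allP => x /flattenP [l /mapP [p pD ->] /mapP [q qM ->]] /=.
by apply: mulr_ge0; [exact: HD | exact: (allP (mut_nonneg p.1))].
Qed.

Lemma sys_mass D : all (fun q => 0 <= q.2) D -> expect D (fun _ => 1) <= 1 ->
  expect (system_step P D) (fun _ => 1) <= 1.
Proof.
move=> /allP HD H; rewrite expect_system_step; apply: le_trans H.
rewrite /expect big_seq [X in _ <= X]big_seq; apply: ler_sum => p pD /=.
rewrite mulr1 -[X in _ <= X]mulr1; apply: ler_wpM2l; [exact: HD | exact: mut_mass].
Qed.

Lemma sys_bound D c : all (fun q => 0 <= q.2) D -> expect D (fun _ => 1) <= 1 ->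
  expect (system_step P D) (fun u => ((size u)%:R - c - (tau - 1)) ^+ 2)
  <= expect D (fun u => ((size u)%:R - c) ^+ 2) + KK.
Proof.
move=> /allP HD H; rewrite expect_system_step.
apply: (@le_trans _ _ (\sum_(p <- D) p.2 * (((size p.1)%:R - c) ^+ 2 + KK))).
  rewrite big_seq [X in _ <= X]big_seq; apply: ler_sum => p pD /=.
  by apply: ler_wpM2l; [exact: HD | exact: mut_bound].
rewrite /expect; under eq_bigr do rewrite mulrDr.
rewrite big_split /= lerD2l -mulr_suml.
have Hm : \sum_(p <- D) p.2 <= 1 by move: H; rewrite /expect; under eq_bigr do rewrite mulr1.
rewrite -[X in _ <= X]mul1r.
exact: (ler_wpM2r K_ge0 Hm).
Qed.

Lemma law_inv w n :
  all (fun q => 0 <= q.2) (system_law P w n) /\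
  expect (system_law P w n) (fun _ => 1) <= 1 /\
  expect (system_law P w n)
    (fun u => ((size u)%:R - (n%:R * (tau - 1) + (size w)%:R)) ^+ 2) <= n%:R * KK.
Proof.
elim: n => [|n [H1 [H2 H3]]].
  rewrite /system_law /= /expect !big_cons !big_nil /=.
  split; first by rewrite ler01.
  split; first by rewrite !mulr1 addr0.
  by rewrite mul0r add0r subrr expr0n /= mulr0 addr0 mul0r.
have -> : system_law P w n.+1 = system_step P (system_law P w n) by [].
split; first exact: sys_nonneg.
split; first exact: sys_mass.
rewrite (@expect_ext R _ _ _ (fun u => ((size u)%:R - (n%:R * (tau - 1) + (size w)%:R)
             - (tau - 1)) ^+ 2)); last by move=> u; rewrite -natr1; ring.
apply: le_trans (sys_bound _ _ H1 H2) _.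
by rewrite -natr1 mulrDl mul1r lerD2r.
Qed.

End Main.

Theorem mainTheorem11 (R : realType) (d : nat)
    (P : 'I_d -> fdist R (seq 'I_d)) (tau : R) (w : seq 'I_d) :
  avg_mutation_law P tau -> 1 < tau -> (0 < size w)%N ->
  exists C0 : R, forall n : nat, (1 <= n)%N ->
    (1 / (n%:R * (tau - 1) + (size w)%:R) ^+ 2) *
      expect (system_law P w n)
        (fun v => ((size v)%:R - n%:R * (tau - 1) - (size w)%:R) ^+ 2)
    <= C0 / n%:R.
Proof.
move=> HP Htau Hw; exists ((@KK R d P tau) / (tau - 1) ^+ 2) => n Hn.
have [_ [_ H]] := @law_inv R d P tau HP w n.
rewrite (@expect_ext R _ _ _ (fun v => ((size v)%:R - (n%:R * (tau - 1) + (size w)%:R)) ^+ 2));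
  last by move=> v; ring.
have ht : 0 < tau - 1 by rewrite subr_gt0.
have hn : 0 < n%:R :> R by rewrite ltr0n.
have ha : 0 < n%:R * (tau - 1) by rewrite mulr_gt0.
have hc : n%:R * (tau - 1) <= n%:R * (tau - 1) + (size w)%:R by rewrite lerDl ler0n.
have hc0 : 0 < n%:R * (tau - 1) + (size w)%:R by apply: lt_le_trans hc.
apply: (@le_trans _ _ (1 / (n%:R * (tau - 1) + (size w)%:R) ^+ 2 * (n%:R * (@KK R d P tau)))).
  by apply: ler_wpM2l => //; rewrite divr_ge0 ?sqr_ge0.
apply: (@le_trans _ _ (1 / (n%:R * (tau - 1)) ^+ 2 * (n%:R * (@KK R d P tau)))).
  apply: ler_wpM2r; first by rewrite mulr_ge0 ?ler0n ?(@K_ge0 R d P tau HP).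
  rewrite !div1r lef_pV2 ?posrE ?exprn_gt0 // !expr2.
  by apply: ler_pM => //; apply: ltW.
rewrite le_eqVlt; apply/orP; left; apply/eqP.
field; apply/andP; split; rewrite ?lt0r_neq0 //.
Qed.
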